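(* For all monitors $m,n$: $m\simeq_\omega n$ if and only if, for every closed substitution $\sigma$, the set $$\mathcal{S}_{m,n,\sigma}=\big(L_a(\sigma(m))\setminus L_a(\sigma(n))\big)\cup\big(L_r(\sigma(m))\setminus L_r(\sigma(n))\big)\cup\big(L_a(\sigma(n))\setminus L_a(\sigma(m))\big)\cup\big(L_r(\sigma(n))\setminus L_r(\sigma(m))\big)$$ is finite.
   Context: Monitors: terms $m,n ::= v \mid a.m \mid m+n \mid x$ over a nonempty action set $\mathit{Act}$ and variables $x$, verdicts $v::=\mathit{end}\mid\mathit{yes}\mid\mathit{no}$; a closed substitution maps each variable to a variable-free monitor. Semantics: $\xrightarrow{\alpha}$ ($\alpha\in\mathit{Act}\cup\{\tau\}$) is the least relation with $a.m\xrightarrow{a}m$; $m\xrightarrow{\alpha}m'$ implies $m+n\xrightarrow{\alpha}m'$ and $n+m\xrightarrow{\alpha}m'$; $v\xrightarrow{\alpha}v$ for verdicts $v$. Weak transitions: $m\xRightarrow{\varepsilon}m'$ iff $m(\xrightarrow{\tau})^*m'$; $m\xRightarrow{a}m'$ iff $m\xRightarrow{\varepsilon}\xrightarrow{a}\xRightarrow{\varepsilon}m'$; $m\xRightarrow{as'}m'$ ($s'\ne\varepsilon$) iff $m\xRightarrow{a}m_1\xRightarrow{s'}m'$. For closed $m$, $L_a(m)=\{s\in\mathit{Act}^*\mid m\xRightarrow{s}\mathit{yes}\}$, $L_r(m)=\{s\in\mathit{Act}^*\mid m\xRightarrow{s}\mathit{no}\}$; closed $m\simeq_\omega n$ iff $L_a(m)\cdot\mathit{Act}^\omega=L_a(n)\cdot\mathit{Act}^\omega$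 and $L_r(m)\cdot\mathit{Act}^\omega=L_r(n)\cdot\mathit{Act}^\omega$ ($\mathit{Act}^\omega$: infinite sequences over $\mathit{Act}$); for open terms $m\simeq_\omega n$ iff $\sigma(m)\simeq_\omega\sigma(n)$ for every closed substitution $\sigma$. *)

(* Defs.v *)
From Stdlib Require Import List Relations.
Import ListNotations.
Set Implicit Arguments.

Section Monitors.
Variable Act : Type.
Variable V : Type.

Inductive verdict : Type := vend | vyes | vno.

Inductive monitor : Type :=
| mverd : verdict -> monitor
| mpre  : Act -> monitor -> monitor
| msum  : monitor -> monitor -> monitor
| mvar  : V -> monitor.

Fixpoint closed (m : monitor) : Prop :=
  match m with
  | mverd _ => True
  | mpre _ m => closed m
  | msum m n => closed m /\ closed n
  | mvar _ => False
  end.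

Fixpoint subst (s : V -> monitor) (m : monitor) : monitor :=
  match m with
  | mverd v => mverd v
  | mpre a m => mpre a (subst s m)
  | msum m n => msum (subst s m) (subst s n)
  | mvar x => s x
  end.

Definition closed_subst (s : V -> monitor) : Prop := forall x, closed (s x).

(* labels: Some a = action a, None = tau *)
Inductive step : monitor -> option Act -> monitor -> Prop :=
| st_pre  : forall a m, step (mpre a m) (Some a) m
| st_suml : forall m n al m', step m al m' -> step (msum m n) al m'
| st_sumr : forall m n al m', step m al m' -> step (msum n m) al m'
| st_verd : forall v al, step (mverd v) al (mverd v).

Definition tau_star : relation monitor :=
  clos_refl_trans monitor (fun m m' => step m None m').

Definition weak_act (a : Act) (m m' : monitor) : Prop :=
  exists m1 m2, tau_star m m1 /\ step m1 (Some a) m2 /\ tau_star m2 m'.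

Fixpoint weak (s : list Act) (m m' : monitor) : Prop :=
  match s with
  | [] => tau_star m m'
  | [a] => weak_act a m m'
  | a :: s' => exists m1, weak_act a m m1 /\ weak s' m1 m'
  end.

Definition La (m : monitor) (s : list Act) : Prop := weak s m (mverd vyes).
Definition Lr (m : monitor) (s : list Act) : Prop := weak s m (mverd vno).

(* L . Act^omega, infinite sequences as nat -> Act *)
Definition is_prefix (s : list Act) (w : nat -> Act) : Prop :=
  forall i, i < length s -> nth_error s i = Some (w i).

Definition omega_ext (L : list Act -> Prop) (w : nat -> Act) : Prop :=
  exists s, L s /\ is_prefix s w.

Definition same_omega (L1 L2 : list Act -> Prop) : Prop :=
  forall w, omega_ext L1 w <-> omega_ext L2 w.

Definition omega_equiv_closed (m n : monitor) : Prop :=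
  same_omega (La m) (La n) /\ same_omega (Lr m) (Lr n).

Definition omega_equiv (m n : monitor) : Prop :=
  forall s, closed_subst s -> omega_equiv_closed (subst s m) (subst s n).

Definition finite_set (S : list Act -> Prop) : Prop :=
  exists l : list (list Act), forall s, S s -> In s l.

Definition diff_set (m n : monitor) (s : list Act) : Prop :=
  (La m s /\ ~ La n s) \/ (Lr m s /\ ~ Lr n s) \/
  (La n s /\ ~ La m s) \/ (Lr n s /\ ~ Lr m s).

End Monitors.

(* Main.v *)
Require Import Defs.
From Stdlib Require Import List Relations Lia Classical.
Import ListNotations.

Section Proof.
Variable Act V : Type.
Local Notation mon := (monitor Act V).
Local Notation Verd v := (mverd Act V v).
Local Notation tau_star := (@tau_star Act V).
Local Notation weak_act := (@weak_act Act V).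

Fixpoint weak' (s : list Act) (m m' : mon) : Prop :=
  match s with
  | [] => tau_star m m'
  | a :: s' => exists m1, weak_act a m m1 /\ weak' s' m1 m'
  end.

Lemma tau_trans x y z : tau_star x y -> tau_star y z -> tau_star x z.
Proof. intros; eapply rt_trans; eauto. Qed.

Lemma weak_act_tail a x y z : weak_act a x y -> tau_star y z -> weak_act a x z.
Proof. intros (m1 & m2 & H1 & H2 & H3) H. exists m1, m2; repeat split; eauto using tau_trans. Qed.

Lemma weak_act_head a x y z : tau_star x y -> weak_act a y z -> weak_act a x z.
Proof. intros H (m1 & m2 & H1 & H2 & H3). exists m1, m2; repeat split; eauto using tau_trans. Qed.

Lemma weak_eq s m m' : weak s m m' <-> weak' s m m'.
Proof.
  revert m; induction s as [|a s IH]; intro m; [simpl; tauto|].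
  destruct s as [|b s].
  - simpl; split.
    + intro H; exists m'; split; auto. apply rt_refl.
    + intros (m1 & H1 & H2); eauto using weak_act_tail.
  - change (weak (a :: b :: s) m m') with (exists m1, weak_act a m m1 /\ weak (b::s) m1 m').
    change (weak' (a :: b :: s) m m') with (exists m1, weak_act a m m1 /\ weak' (b::s) m1 m').
    split; intros (m1 & H1 & H2); exists m1; split; auto; apply IH; auto.
Qed.

Lemma weak'_head s x y z : tau_star x y -> weak' s y z -> weak' s x z.
Proof.
  destruct s; simpl.
  - apply tau_trans.
  - intros H (m1 & H1 & H2). exists m1; split; eauto using weak_act_head.
Qed.

Lemma weak'_verd s v : weak' s (Verd v) (Verd v).
Proof.
  induction s; simpl. apply rt_refl.
  exists (Verd v); split; auto. exists (Verd v), (Verd v); repeat split; try apply rt_refl. constructor.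
Qed.

Lemma weak'_ext s t m v : weak' s m (Verd v) -> weak' (s ++ t) m (Verd v).
Proof.
  revert m; induction s as [|a s IH]; intro m; simpl.
  - intro H. eapply weak'_head; eauto. apply weak'_verd.
  - intros (m1 & H1 & H2). exists m1; split; auto.
Qed.

Lemma tau_notau x y : (forall z, ~ step x None z) -> tau_star x y -> y = x.
Proof.
  intros Hn H. apply clos_rt_rt1n in H. destruct H; auto. exfalso; eapply Hn; eauto.
Qed.

Lemma tau_verd u y : tau_star (Verd u) y -> y = Verd u.
Proof.
  intro H. apply clos_rt_rt1n in H. remember (Verd u) as x. induction H; auto.
  subst. inversion H; subst; auto.
Qed.

Lemma tau_sum m n x : tau_star (msum m n) x -> x = msum m n \/ tau_star m x \/ tau_star n x.
Proof.
  intro H. apply clos_rt_rt1n in H. destruct H; auto.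
  apply clos_rt1n_rt in H0. inversion H; subst.
  - right; left. eapply rt_trans; [apply rt_step; eauto| auto].
  - right; right. eapply rt_trans; [apply rt_step; eauto| auto].
Qed.

Lemma lift_sum m n x al y (side : bool) :
  tau_star (if side then m else n) x -> step x al y ->
  exists x', tau_star (msum m n) x' /\ step x' al y.
Proof.
  intros H Hs. apply clos_rt_rt1n in H. destruct H.
  - exists (msum m n); split; [apply rt_refl|]. destruct side; [apply st_suml|apply st_sumr]; auto.
  - exists z; split; auto. apply clos_rt1n_rt in H0.
    eapply rt_trans; [apply rt_step|apply H0]. destruct side; [apply st_suml|apply st_sumr]; auto.
Qed.

Lemma weak'_sum (side : bool) m n s v :
  weak' s (if side then m else n) (Verd v) -> weak' s (msum m n) (Verd v).
Proof.
  destruct s; simpl.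
  - intro H. destruct (@lift_sum m n _ _ _ side H (@st_verd _ _ v None)) as (x' & H1 & H2).
    eapply rt_trans; eauto. apply rt_step; auto.
  - intros (m1 & (a1 & a2 & H1 & H2 & H3) & H4).
    destruct (@lift_sum m n _ _ _ side H1 H2) as (x' & G1 & G2).
    exists m1; split; auto. exists x', a2; auto.
Qed.

Fixpoint F (v : verdict) (m : mon) : list (list Act) :=
  match m with
  | mverd _ _ u => if (match u, v with vend, vend | vyes, vyes | vno, vno => true | _, _ => false end)
                   then [[]] else []
  | mpre a m => map (cons a) (F v m)
  | msum m n => F v m ++ F v n
  | mvar _ _ => []
  end.

Lemma F_sound v m f : In f (F v m) -> weak' f m (Verd v).
Proof.
  revert f; induction m as [u|a m IH|m IHm n IHn|x]; intros f Hf; simpl in Hf.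
  - destruct u, v; simpl in Hf; try contradiction; destruct Hf as [<-|[]]; apply rt_refl.
  - apply in_map_iff in Hf. destruct Hf as (f' & <- & Hf'). simpl.
    exists m; split; auto. exists (mpre a m), m; repeat split; try apply rt_refl. constructor.
  - apply in_app_or in Hf; destruct Hf as [Hf|Hf].
    + apply (@weak'_sum true m n); auto.
    + apply (@weak'_sum false m n); auto.
  - contradiction.
Qed.

Lemma weak'_verd_inv s u y : weak' s (Verd u) y -> y = Verd u.
Proof.
  revert y; induction s as [|a s IH]; intros y H; simpl in H.
  - apply tau_verd; auto.
  - destruct H as (m1 & (a1 & a2 & H1 & H2 & H3) & H4).
    apply tau_verd in H1; subst. inversion H2; subst.
    apply tau_verd in H3; subst. apply IH; auto.
Qed.

Lemma F_complete v m s : weak' s m (Verd v) -> exists f t, In f (F v m) /\ s = f ++ t.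
Proof.
  revert s; induction m as [u|a m IH|m IHm n IHn|x]; intros s Hs.
  - apply weak'_verd_inv in Hs. inversion Hs as [E]; subst u.
    exists [], s; split; auto. destruct v; simpl; auto.

  - destruct s as [|b s]; simpl in Hs.
    + apply tau_notau in Hs; [discriminate|]. intros z Hz; inversion Hz.
    + destruct Hs as (m1 & (a1 & a2 & H1 & H2 & H3) & H4).
      apply tau_notau in H1; [|intros z Hz; inversion Hz]. subst.
      inversion H2; subst.
      destruct (IH s) as (f & t & Hf & ->).
      { eapply weak'_head; eauto. }
      exists (b :: f), t; split; auto. simpl. apply in_map; auto.
  - assert (Hs' : weak' s m (Verd v) \/ weak' s n (Verd v)).
    { destruct s as [|b s]; simpl in Hs.
      - destruct (tau_sum _ _ _ Hs) as [E|[E|E]]; [discriminate|auto|auto].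
      - destruct Hs as (m1 & (a1 & a2 & H1 & H2 & H3) & H4).
        destruct (tau_sum _ _ _ H1) as [E|[E|E]].
        + subst. inversion H2; subst; [left|right]; simpl; exists m1; split; auto.
          * exists m, a2; repeat split; auto; apply rt_refl.
          * exists n, a2; repeat split; auto; apply rt_refl.
        + left; simpl; exists m1; split; auto; exists a1, a2; auto.
        + right; simpl; exists m1; split; auto; exists a1, a2; auto. }
    destruct Hs' as [H|H].
    + destruct (IHm _ H) as (f & t & Hf & ->). exists f, t; split; auto. simpl; apply in_or_app; auto.
    + destruct (IHn _ H) as (f & t & Hf & ->). exists f, t; split; auto. simpl; apply in_or_app; auto.
  - destruct s as [|b s]; simpl in Hs.
    + apply tau_notau in Hs; [discriminate|]. intros z Hz; inversion Hz.
    + destruct Hs as (m1 & (a1 & a2 & H1 & H2 & H3) & H4).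
      apply tau_notau in H1; [|intros z Hz; inversion Hz]. subst. inversion H2.
Qed.

Lemma pref_cons a s (u : nat -> Act) : is_prefix (a :: s) u -> u 0 = a /\ is_prefix s (fun i => u (S i)).
Proof.
  intro H. split.
  - specialize (H 0 ltac:(simpl; lia)). simpl in H. congruence.
  - intros i Hi. apply (H (S i)). simpl; lia.
Qed.

Lemma pref_common s w (u : nat -> Act) : is_prefix s u -> is_prefix w u -> length s <= length w ->
  exists t, w = s ++ t.
Proof.
  revert w u; induction s as [|a s IH]; intros w u H1 H2 Hl.
  - exists w; auto.
  - destruct w as [|b w]; simpl in Hl; [lia|].
    apply pref_cons in H1; apply pref_cons in H2.
    destruct H1 as [E1 H1], H2 as [E2 H2].
    destruct (IH w _ H1 H2 ltac:(lia)) as (t & ->). exists t. simpl; congruence.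
Qed.

Lemma pref_app f t (u : nat -> Act) : is_prefix (f ++ t) u -> is_prefix f u.
Proof.
  intros H i Hi. rewrite <- (H i); [|rewrite length_app; lia].
  rewrite nth_error_app1; auto.
Qed.

Fixpoint allpre (f : list Act) : list (list Act) :=
  match f with [] => [[]] | a :: f => [] :: map (cons a) (allpre f) end.

Lemma allpre_in s t : In s (allpre (s ++ t)).
Proof.
  induction s as [|a s IH]; simpl.
  - destruct t; simpl; auto.
  - right. apply in_map; auto.
Qed.

Fixpoint maxlen (l : list (list Act)) : nat :=
  match l with [] => 0 | x :: l => max (length x) (maxlen l) end.

Lemma maxlen_in s l : In s l -> length s <= maxlen l.
Proof. induction l; simpl; [tauto|intros [->|H]; try specialize (IHl H); lia]. Qed.

Definition extclosed (L : list Act -> Prop) := forall s t, L s -> L (s ++ t).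

Lemma K (a0 : Act) (L1 L2 : list Act -> Prop) (Fl : list (list Act)) w :
  (forall u, omega_ext L1 u -> omega_ext L2 u) ->
  (forall f, In f Fl -> L2 f) -> (forall s, L2 s -> exists f t, In f Fl /\ s = f ++ t) ->
  extclosed L2 -> L1 w -> ~ L2 w -> exists f t, In f Fl /\ f = w ++ t.
Proof.
  intros Hom Hs Hc He H1 H2.
  set (u := fun i => nth i w a0).
  assert (Pw : is_prefix w u).
  { intros i Hi. unfold u. apply nth_error_nth'; auto. }
  destruct (Hom u) as (s2 & Hs2 & Ps2). { exists w; auto. }
  destruct (Hc _ Hs2) as (f & t & Hf & ->).
  apply pref_app in Ps2.
  destruct (PeanoNat.Nat.le_gt_cases (length f) (length w)).
  - destruct (pref_common _ _ _ Ps2 Pw H) as (t' & ->). exfalso; apply H2, He, Hs; auto.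
  - destruct (pref_common _ _ _ Pw Ps2 ltac:(lia)) as (t' & ->). exists (w ++ t'), t'; auto.
Qed.

Lemma G (L1 L2 : list Act -> Prop) (l : list (list Act)) (u : nat -> Act) :
  extclosed L1 -> (forall s, L1 s -> ~ L2 s -> In s l) -> omega_ext L1 u -> omega_ext L2 u.
Proof.
  intros He Hl (s & Hs & Ps).
  set (K := S (max (length s) (maxlen l))).
  set (p := map u (seq 0 K)).
  assert (Pp : is_prefix p u).
  { intros i Hi. unfold p in *. rewrite length_map, length_seq in Hi.
    rewrite nth_error_map, nth_error_seq.
    destruct (PeanoNat.Nat.ltb_spec i K); [reflexivity|lia]. }
  assert (Lp : length p = K) by (unfold p; rewrite length_map, length_seq; auto).
  destruct (pref_common _ _ _ Ps Pp ltac:(lia)) as (t & Ep).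
  assert (L1 p) by (rewrite Ep; apply He; auto).
  destruct (classic (L2 p)) as [Hp|Hp].
  - exists p; auto.
  - exfalso. pose proof (maxlen_in _ _ (Hl p H Hp)). lia.
Qed.

Lemma La_ext v (m : mon) : extclosed (fun s => weak s m (Verd v)).
Proof. intros s t H. apply weak_eq in H; apply weak_eq. apply weak'_ext; auto. Qed.

End Proof.

Theorem mainTheorem18 (Act V : Type) (a0 : Act) (m n : monitor Act V) :
  omega_equiv m n <->
  (forall s : V -> monitor Act V, closed_subst s ->
     finite_set (diff_set (subst s m) (subst s n))).
Proof.
  split.
  - intros Heq sg Hsg. destruct (Heq sg Hsg) as [Ha Hr].
    set (M := subst sg m) in *. set (N := subst sg n) in *.
    exists (flat_map (@allpre Act) (F Act V vyes M ++ F Act V vno M ++ F Act V vyes N ++ F Act V vno N)).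
    assert (Hgen : forall (v : verdict) (X Y : monitor Act V) w,
      (forall u, omega_ext (fun s => weak s X (mverd Act V v)) u -> omega_ext (fun s => weak s Y (mverd Act V v)) u) ->
      weak w X (mverd Act V v) -> ~ weak w Y (mverd Act V v) ->
      exists f t, In f (F Act V v Y) /\ f = w ++ t).
    { intros v X Y w Ho H1 H2.
      apply (K _ a0 (fun s => weak s X (mverd Act V v)) (fun s => weak s Y (mverd Act V v))); auto.
      - intros f Hf. apply weak_eq, F_sound; auto.
      - intros s Hs. apply weak_eq in Hs. apply F_complete; auto.
      - apply La_ext. }
    intros w Hw. apply in_flat_map.
    destruct Hw as [[H1 H2]|[[H1 H2]|[[H1 H2]|[H1 H2]]]].
    + destruct (Hgen vyes M N w (fun u => proj1 (Ha u)) H1 H2) as (f & t & Hf & ->).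
      exists (w ++ t); split; [|apply allpre_in]. rewrite !in_app_iff; tauto.
    + destruct (Hgen vno M N w (fun u => proj1 (Hr u)) H1 H2) as (f & t & Hf & ->).
      exists (w ++ t); split; [|apply allpre_in]. rewrite !in_app_iff; tauto.
    + destruct (Hgen vyes N M w (fun u => proj2 (Ha u)) H1 H2) as (f & t & Hf & ->).
      exists (w ++ t); split; [|apply allpre_in]. rewrite !in_app_iff; tauto.
    + destruct (Hgen vno N M w (fun u => proj2 (Hr u)) H1 H2) as (f & t & Hf & ->).
      exists (w ++ t); split; [|apply allpre_in]. rewrite !in_app_iff; tauto.
  - intros Hf sg Hsg. destruct (Hf sg Hsg) as (l & Hl).
    unfold omega_equiv_closed, same_omega, La, Lr. split; intro u; split;
      apply (G _ _ _ l); try apply La_ext; intros s H1 H2; apply Hl; unfold diff_set, La, Lr; tauto.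
Qed.
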